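(* Let $a,b,c$ be three points on a circle of radius $1$ with center $o$ in the plane, such that $o$ lies in the (closed) triangle $\triangle abc$. Then the perimeter of $\triangle abc$ is at least $4$. *)

(* Defs.v *)
From Stdlib Require Import Reals.
Open Scope R_scope.

Definition point : Type := (R * R)%type.

Definition dist2 (p q : point) : R :=
  sqrt ((fst p - fst q) ^ 2 + (snd p - snd q) ^ 2).

Definition in_closed_triangle (p a b c : point) : Prop :=
  exists l1 l2 l3 : R,
    0 <= l1 /\ 0 <= l2 /\ 0 <= l3 /\ l1 + l2 + l3 = 1 /\
    fst p = l1 * fst a + l2 * fst b + l3 * fst c /\
    snd p = l1 * snd a + l2 * snd b + l3 * snd c.

Definition perimeter (a b c : point) : R :=
  dist2 a b + dist2 b c + dist2 c a.

(* Main.v *)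
Require Import Defs.
From Stdlib Require Import Reals Lra Psatz.
Open Scope R_scope.

Lemma key3 (ax ay bx by' cx cy l1 l2 l3 : R) :
  ax^2 + ay^2 = 1 -> bx^2 + by'^2 = 1 -> cx^2 + cy^2 = 1 ->
  0 <= l1 -> 0 <= l2 -> 0 < l3 ->
  l1*ax + l2*bx + l3*cx = 0 -> l1*ay + l2*by' + l3*cy = 0 ->
  (ax*bx+ay*by') + (bx*cx+by'*cy) + (ax*cx+ay*cy) <= -1.
Proof.
  intros Ha Hb Hc H1 H2 H3 Ex Ey.
  set (p := ax*bx+ay*by').
  assert (Hp1 : 0 <= 1 + p) by (unfold p; pose proof (pow2_ge_0 (ax+bx)); pose proof (pow2_ge_0 (ay+by')); nra).
  assert (Hp2 : p <= 1) by (unfold p; pose proof (pow2_ge_0 (ax-bx)); pose proof (pow2_ge_0 (ay-by')); nra).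
  assert (Xc : l3*cx = -(l1*ax+l2*bx)) by lra.
  assert (Yc : l3*cy = -(l1*ay+l2*by')) by lra.
  assert (Hl : l3^2 = l1^2 + l2^2 + 2*l1*l2*p).
  { replace (l3^2) with ((l3*cx)^2 + (l3*cy)^2) by (rewrite <- (Rmult_1_r (l3^2)), <- Hc; ring).
    rewrite Xc, Yc. unfold p.
    transitivity (l1^2*(ax^2+ay^2) + l2^2*(bx^2+by'^2) + 2*l1*l2*(ax*bx+ay*by')); [ring|].
    rewrite Ha, Hb; ring. }
  assert (Hs : l3 <= l1 + l2).
  { assert (0 <= l1*l2*(1-p)) by (apply Rmult_le_pos; [apply Rmult_le_pos|]; lra).
    assert ((l1+l2)^2 >= l3^2) by (rewrite Hl; nra).
    destruct (Rle_or_lt l3 (l1+l2)) as [|Hlt]; [auto|].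
    assert ((l1+l2)^2 < l3^2) by (apply pow_lt_1_compat || nra). lra. }
  assert (Hid : l3 * ((ax*bx+ay*by') + (bx*cx+by'*cy) + (ax*cx+ay*cy) + 1)
               = (1+p)*(l3-l1-l2)).
  { transitivity (l3*p + bx*(l3*cx) + by'*(l3*cy) + ax*(l3*cx) + ay*(l3*cy) + l3).
    - unfold p; ring.
    - rewrite Xc, Yc. unfold p.
      transitivity (l3*p - l1*(ax*bx+ay*by') - l2*(bx^2+by'^2) - l1*(ax^2+ay^2) - l2*(ax*bx+ay*by') + l3); [unfold p; ring|].
      rewrite Ha, Hb. unfold p; ring. }
  assert (Hn : l3 * ((ax*bx+ay*by') + (bx*cx+by'*cy) + (ax*cx+ay*cy) + 1) <= 0).
  { rewrite Hid. assert (0 <= (1+p)*(l1+l2-l3)) by (apply Rmult_le_pos; lra). lra. }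
  destruct (Rle_or_lt ((ax*bx+ay*by') + (bx*cx+by'*cy) + (ax*cx+ay*cy)) (-1)) as [|Hgt]; [auto|].
  assert (0 < l3 * ((ax*bx+ay*by') + (bx*cx+by'*cy) + (ax*cx+ay*cy) + 1)) by (apply Rmult_lt_0_compat; lra).
  lra.
Qed.

Lemma sqrt_half (d : R) : 0 <= d -> d <= 4 -> d/2 <= sqrt d.
Proof.
  intros H0 H4.
  assert (Hs := sqrt_pos d). assert (Hq := sqrt_sqrt d H0).
  assert (sqrt d <= 2).
  { rewrite <- (sqrt_square 2) by lra. apply sqrt_le_1_alt. lra. }
  nra.
Qed.

Lemma unit_of (x y : R) : sqrt (x^2+y^2) = 1 -> x^2+y^2 = 1.
Proof.
  intro H. assert (0 <= x^2+y^2) by (pose proof (pow2_ge_0 x); pose proof (pow2_ge_0 y); lra).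
  rewrite <- (sqrt_sqrt _ H0), H. ring.
Qed.

Lemma chord (ax ay bx by' : R) :
  ax^2 + ay^2 = 1 -> bx^2 + by'^2 = 1 ->
  1 - (ax*bx+ay*by') <= sqrt ((ax-bx)^2 + (ay-by')^2).
Proof.
  intros Ha Hb.
  assert (E : (ax-bx)^2 + (ay-by')^2 = 2 - 2*(ax*bx+ay*by')).
  { transitivity ((ax^2+ay^2) + (bx^2+by'^2) - 2*(ax*bx+ay*by')); [ring|]. rewrite Ha, Hb; ring. }
  assert (0 <= (ax+bx)^2 + (ay+by')^2) by (pose proof (pow2_ge_0 (ax+bx)); pose proof (pow2_ge_0 (ay+by')); lra).
  assert (E2 : (ax+bx)^2 + (ay+by')^2 = 2 + 2*(ax*bx+ay*by')).
  { transitivity ((ax^2+ay^2) + (bx^2+by'^2) + 2*(ax*bx+ay*by')); [ring|]. rewrite Ha, Hb; ring. }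
  assert (0 <= (ax-bx)^2 + (ay-by')^2) by (pose proof (pow2_ge_0 (ax-bx)); pose proof (pow2_ge_0 (ay-by')); lra).
  pose proof (sqrt_half ((ax-bx)^2 + (ay-by')^2) H0 ltac:(lra)). lra.
Qed.

Theorem lemma1 (o a b c : point) :
  dist2 o a = 1 -> dist2 o b = 1 -> dist2 o c = 1 ->
  in_closed_triangle o a b c ->
  4 <= perimeter a b c.
Proof.
  destruct o as [ox oy], a as [a1 a2], b as [b1 b2], c as [c1 c2].
  unfold perimeter, dist2, in_closed_triangle; cbn [fst snd].
  intros Ha Hb Hc [l1 [l2 [l3 [H1 [H2 [H3 [Hs [Ex Ey]]]]]]]].
  apply unit_of in Ha, Hb, Hc.
  assert (Ua : (a1-ox)^2 + (a2-oy)^2 = 1) by (rewrite <- Ha; ring).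
  assert (Ub : (b1-ox)^2 + (b2-oy)^2 = 1) by (rewrite <- Hb; ring).
  assert (Uc : (c1-ox)^2 + (c2-oy)^2 = 1) by (rewrite <- Hc; ring).
  assert (Ex' : l1*(a1-ox) + l2*(b1-ox) + l3*(c1-ox) = 0).
  { transitivity ((l1*a1+l2*b1+l3*c1) - (l1+l2+l3)*ox); [ring|]. rewrite Hs, <- Ex; ring. }
  assert (Ey' : l1*(a2-oy) + l2*(b2-oy) + l3*(c2-oy) = 0).
  { transitivity ((l1*a2+l2*b2+l3*c2) - (l1+l2+l3)*oy); [ring|]. rewrite Hs, <- Ey; ring. }
  replace (a1-b1) with ((a1-ox)-(b1-ox)) by ring.
  replace (a2-b2) with ((a2-oy)-(b2-oy)) by ring.
  replace (b1-c1) with ((b1-ox)-(c1-ox)) by ring.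
  replace (b2-c2) with ((b2-oy)-(c2-oy)) by ring.
  replace (c1-a1) with ((c1-ox)-(a1-ox)) by ring.
  replace (c2-a2) with ((c2-oy)-(a2-oy)) by ring.
  set (ax := a1 - ox) in *. set (ay := a2 - oy) in *.
  set (bx := b1 - ox) in *. set (by' := b2 - oy) in *.
  set (cx := c1 - ox) in *. set (cy := c2 - oy) in *.
  assert (S : (ax*bx+ay*by') + (bx*cx+by'*cy) + (ax*cx+ay*cy) <= -1).
  { destruct (Rle_or_lt l3 0) as [h3|h3].
    - destruct (Rle_or_lt l2 0) as [h2|h2].
      + pose proof (key3 bx by' cx cy ax ay l2 l3 l1 Ub Uc Ua H2 H3 ltac:(lra) ltac:(lra) ltac:(lra)). lra.
      + pose proof (key3 ax ay cx cy bx by' l1 l3 l2 Ua Uc Ub H1 H3 h2 ltac:(lra) ltac:(lra)). lra.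
    - exact (key3 ax ay bx by' cx cy l1 l2 l3 Ua Ub Uc H1 H2 h3 Ex' Ey'). }
  pose proof (chord ax ay bx by' Ua Ub).
  pose proof (chord bx by' cx cy Ub Uc).
  pose proof (chord cx cy ax ay Uc Ua).
  rewrite (Rmult_comm cx ax), (Rmult_comm cy ay) in *. lra.
Qed.
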